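(* Let $n\ge3$, let $K$ be a binary dihedral group of order $8d$ with $d\ge2$, and let $H=[K,K]$ (cyclic of order $2d$, with $K/H\cong C_2\times C_2$). Let $\lambda=(\lambda_1,\dots,\lambda_k)$ be a partition of $n$ and $\alpha,\beta\in K$. Then $P_\lambda^\alpha$ and $P_\lambda^\beta$ are conjugate in $G_n(K,H)$ if and only if $\alpha\beta^{-1}\in H$ or $\gcd(\lambda_1,\dots,\lambda_k)$ is odd.
   Context: $\mathbb{H}$: quaternions. $A_n(K,H)$: diagonal matrices $\mathrm{diag}(k_1,\dots,k_n)$, $k_i\in K$, $k_1\cdots k_n\in H$; $G_n(K,H)$: group generated by $A_n(K,H)$ and the permutation matrices $M(\sigma)$, acting on $\mathbb{H}^n$ by left multiplication. For a partition $\lambda=(\lambda_1,\dots,\lambda_k)$ of $n$ with partial sums $m_i=\lambda_1+\dots+\lambda_i$, $m_0=0$, let $I_i=\{m_{i-1}+1,\dots,m_i\}$; for $\alpha\in K$ let $D_\alpha=\mathrm{diag}(\alpha,1,\dots,1)$. Then $P_\lambda^\alpha=P_1\times\dots\times P_k$ with $P_i=\{D_\alpha M(\sigma)D_\alpha^{-1}:\sigma\in\mathrm{Sym}(I_i)\}$. *)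

(* Defs.v *)
From mathcomp Require Import all_boot all_order all_algebra all_fingroup.
From mathcomp Require Import reals.
Set Implicit Arguments. Unset Strict Implicit. Unset Printing Implicit Defensive.
Import Order.TTheory GRing.Theory Num.Theory.
Local Open Scope ring_scope.

Section Quat.
Variable R : realType.

(** Real quaternions a + b i + c j + d k, stored as ((a, b), c), d.
    The additive structure is the canonical one on products. *)
Definition quat := (R * R * R * R)%type.

Definition mkq (a b c d : R) : quat := (a, b, c, d).

Definition qmul (x y : quat) : quat :=
  let: (a1, b1, c1, d1) := x in
  let: (a2, b2, c2, d2) := y in
  mkq (a1 * a2 - b1 * b2 - c1 * c2 - d1 * d2)
      (a1 * b2 + b1 * a2 + c1 * d2 - d1 * c2)
      (a1 * c2 - b1 * d2 + c1 * a2 + d1 * b2)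
      (a1 * d2 + b1 * c2 - c1 * b2 + d1 * a2).

Definition qone : quat := mkq 1 0 0 0.
Definition qi : quat := mkq 0 1 0 0.
Definition qj : quat := mkq 0 0 1 0.

Definition qinv (x : quat) : quat :=
  let: (a, b, c, d) := x in
  let N := a ^+ 2 + b ^+ 2 + c ^+ 2 + d ^+ 2 in
  mkq (a / N) (- b / N) (- c / N) (- d / N).

Fixpoint qpow (x : quat) (k : nat) : quat :=
  if k is k'.+1 then qmul x (qpow x k') else qone.

Definition is_complex (x : quat) : Prop :=
  let: (_, _, c, d) := x in c = 0 /\ d = 0.

Definition has_order (x : quat) (m : nat) : Prop :=
  (0 < m)%N /\ qpow x m = qone /\ forall k, (0 < k < m)%N -> qpow x k <> qone.

(** The binary dihedral group <zeta, j> (of order 8d when zeta is a complex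
    number of multiplicative order 4d). *)
Definition BinDih (zeta : quat) (x : quat) : Prop :=
  exists k e : nat, x = qmul (qpow zeta k) (qpow qj e).

(** The set of commutators is closed under
    inverses and K is finite, so the submonoid generated is the subgroup. *)
Definition qcomm (x y : quat) : quat := qmul (qmul x y) (qmul (qinv x) (qinv y)).

Inductive commutator_subgroup (K : quat -> Prop) : quat -> Prop :=
| CS1 : commutator_subgroup K qone
| CSstep x y h : K x -> K y -> commutator_subgroup K h ->
                 commutator_subgroup K (qmul (qcomm x y) h).

Definition qmx_mul n (A B : 'M[quat]_n) : 'M[quat]_n :=
  \matrix_(i, j) \sum_(l < n) qmul (A i l) (B l j).

Definition qdiag n (k : 'I_n -> quat) : 'M[quat]_n :=
  \matrix_(i, j) if i == j then k i else 0.

Definition qmx1 n : 'M[quat]_n := qdiag (fun _ => qone).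

Definition qperm_mx n (s : 'S_n) : 'M[quat]_n :=
  \matrix_(i, j) if s i == j then qone else 0.

Definition qprod n (k : 'I_n -> quat) : quat :=
  foldr qmul qone [seq k i | i <- enum 'I_n].

Definition A_set n (K H : quat -> Prop) (M : 'M[quat]_n) : Prop :=
  exists k : 'I_n -> quat, (forall i, K (k i)) /\ H (qprod k) /\ M = qdiag k.

Definition G_gen n (K H : quat -> Prop) (M : 'M[quat]_n) : Prop :=
  A_set K H M \/ exists s : 'S_n, M = qperm_mx s.

(** G_n(K,H): the group generated by A_n(K,H) and the permutation matrices.
    The generating set is closed under inverses and the group is finite, so
    the generated submonoid is the generated group. *)
Inductive G_n n (K H : quat -> Prop) : 'M[quat]_n -> Prop :=
| Gn1 : G_n K H (qmx1 n)
| Gnstep s g : G_gen K H s -> G_n K H g -> G_n K H (qmx_mul s g).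

Definition is_partition (n : nat) (lam : seq nat) : bool :=
  [&& sorted geq lam, all (fun p => 0 < p)%N lam & sumn lam == n].

(** block I_i (0-indexed: i < size lam, entries m_{i} <= j < m_{i+1}) *)
Definition block n (lam : seq nat) (i : nat) : {set 'I_n} :=
  [set j : 'I_n | (sumn (take i lam) <= j < sumn (take i.+1 lam))%N].

Definition young_perm n (lam : seq nat) (s : 'S_n) : Prop :=
  exists f : 'I_(size lam) -> 'S_n,
    (forall i : 'I_(size lam), perm_on (block n lam i) (f i)) /\ s = (\prod_(i < size lam) f i)%g.

Definition D_alpha n (alpha : quat) : 'M[quat]_n :=
  qdiag (fun i : 'I_n => if val i == 0%N then alpha else qone).

Definition P_set n (lam : seq nat) (alpha : quat) (M : 'M[quat]_n) : Prop :=
  exists s : 'S_n, young_perm lam s /\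
    M = qmx_mul (qmx_mul (D_alpha n alpha) (qperm_mx s)) (D_alpha n (qinv alpha)).

Definition conjugate_in n (G P Q : 'M[quat]_n -> Prop) : Prop :=
  exists g h, G g /\ G h /\ qmx_mul g h = qmx1 n /\ qmx_mul h g = qmx1 n /\
    (forall x, P x -> Q (qmx_mul (qmx_mul g x) h)) /\
    (forall y, Q y -> exists x, P x /\ y = qmx_mul (qmx_mul g x) h).

End Quat.

Definition gcd_seq (lam : seq nat) : nat := foldr gcdn 0%N lam.
Arguments P_set {R} n lam alpha M.

(* Main.v *)
Require Import Defs.
From mathcomp Require Import all_boot all_order all_algebra all_fingroup.
From mathcomp Require Import reals ring lra.
Set Implicit Arguments. Unset Strict Implicit. Unset Printing Implicit Defensive.
Import Order.TTheory GRing.Theory Num.Theory.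
Local Open Scope ring_scope.
Section Q.
Variable R : realType.
Implicit Types x y z : quat R.
Arguments qmul : simpl never.
Arguments qinv : simpl never.

Lemma quat0 : (0 : quat R) = mkq 0 0 0 0. Proof. by []. Qed.

Lemma qmulA x y z : qmul x (qmul y z) = qmul (qmul x y) z.
Proof.
case: x => [[[a b] c] d]; case: y => [[[a' b'] c'] d']; case: z => [[[p q] r] s].
rewrite /qmul /mkq; congr (_,_,_,_); ring.
Qed.

Lemma qmul1x x : qmul (qone R) x = x.
Proof. case: x => [[[a b] c] d]; rewrite /qmul /qone /mkq; congr (_,_,_,_); ring. Qed.
Lemma qmulx1 x : qmul x (qone R) = x.
Proof. case: x => [[[a b] c] d]; rewrite /qmul /qone /mkq; congr (_,_,_,_); ring. Qed.
Lemma qmul0x x : qmul 0 x = 0.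
Proof. case: x => [[[a b] c] d]; rewrite quat0 /qmul /mkq; congr (_,_,_,_); ring. Qed.
Lemma qmulx0 x : qmul x 0 = 0.
Proof. case: x => [[[a b] c] d]; rewrite quat0 /qmul /mkq; congr (_,_,_,_); ring. Qed.

Definition qN x : R := let: (a, b, c, d) := x in a ^+ 2 + b ^+ 2 + c ^+ 2 + d ^+ 2.

Arguments qN : simpl never.

Lemma qN_mul x y : qN (qmul x y) = qN x * qN y.
Proof.
case: x => [[[a b] c] d]; case: y => [[[a' b'] c'] d']; rewrite /qmul /mkq /qN /=; ring.
Qed.

Lemma qN_ge0 x : 0 <= qN x.
Proof. case: x => [[[a b] c] d]; rewrite /qN !addr_ge0 ?sqr_ge0 //. Qed.

Lemma qN1 : qN (qone R) = 1.
Proof. rewrite /qN /= expr0n /= expr1n; ring. Qed.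

Lemma qmulV x : qN x != 0 -> qmul x (qinv x) = qone R.
Proof.
case: x => [[[a b] c] d]; rewrite /qN /= => H; rewrite /qmul /qinv /qone /mkq; congr (_,_,_,_); field => //.
Qed.
Lemma qmulVx x : qN x != 0 -> qmul (qinv x) x = qone R.
Proof.
case: x => [[[a b] c] d]; rewrite /qN /= => H; rewrite /qmul /qinv /qone /mkq; congr (_,_,_,_); field => //.
Qed.

Lemma qinv_uniq x y : qN y != 0 -> qmul x y = qone R -> x = qinv y.
Proof.
move=> Hy Hxy; rewrite -[x]qmulx1 -(qmulV Hy) qmulA Hxy qmul1x //.
Qed.

Lemma qcancel_l x y z : qN x != 0 -> qmul x y = qmul x z -> y = z.
Proof.
move=> Hx H; rewrite -[y]qmul1x -[z]qmul1x -(qmulVx Hx) -!qmulA H //.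
Qed.
Lemma qcancel_r x y z : qN x != 0 -> qmul y x = qmul z x -> y = z.
Proof.
move=> Hx H; rewrite -[y]qmulx1 -[z]qmulx1 -(qmulV Hx) !qmulA H //.
Qed.

Lemma qpowD x a b : qpow x (a + b) = qmul (qpow x a) (qpow x b).
Proof.
elim: a => [|a IH]; first by rewrite add0n /= qmul1x.
by rewrite addSn /= IH qmulA.
Qed.

Lemma qpowM x a b : qpow x (a * b) = qpow (qpow x a) b.
Proof. elim: b => [|b IH] /=; first by rewrite muln0. by rewrite mulnS qpowD IH. Qed.

Lemma qpowSr x a : qpow x a.+1 = qmul (qpow x a) x.
Proof. by rewrite -addn1 qpowD /= qmulx1. Qed.

Lemma qN_pow x a : qN (qpow x a) = qN x ^+ a.
Proof. elim: a => [|a IH] /=; first by rewrite qN1 expr0. by rewrite qN_mul IH exprS. Qed.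

Lemma qinv_mul x y : qN x != 0 -> qN y != 0 ->
  qinv (qmul x y) = qmul (qinv y) (qinv x).
Proof.
move=> Hx Hy; symmetry; apply: qinv_uniq; first by rewrite qN_mul mulf_neq0.
by rewrite -qmulA (qmulA (qinv x)) qmulVx // qmul1x qmulVx.
Qed.

Definition cplx x : bool := (x.1.2 == 0) && (x.2 == 0).

Lemma cplx_mul x y : cplx x -> cplx y -> cplx (qmul x y).
Proof.
case: x => [[[a b] c] d]; case: y => [[[a' b'] c'] d'].
rewrite /cplx /= => /andP[/eqP-> /eqP->] /andP[/eqP-> /eqP->].
apply/andP; split; apply/eqP; ring.
Qed.

Lemma cplx1 : cplx (qone R). Proof. by rewrite /cplx /= !eqxx. Qed.

Lemma cplx_pow x a : cplx x -> cplx (qpow x a).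
Proof. move=> Hx; elim: a => [|a IH] /=; [exact: cplx1 | exact: cplx_mul]. Qed.

Lemma j_cplx y : cplx y -> qN y = 1 -> qmul (qj R) y = qmul (qinv y) (qj R).
Proof.
case: y => [[[a b] c] d]; rewrite /cplx /qN /= => /andP[/eqP-> /eqP->] N.
rewrite /qinv /= N !divr1 /qmul /qj /mkq; congr (_,_,_,_); ring.
Qed.

Lemma comm_cplx y : cplx y -> qN y = 1 -> qcomm y (qj R) = qmul y y.
Proof.
case: y => [[[a b] c] d]; rewrite /cplx /qN /= => /andP[/eqP-> /eqP->] N.
have N' : a ^+ 2 + b ^+ 2 = 1 by rewrite -N; ring.
rewrite /qcomm /qinv N /qmul /qj /mkq /=.
have -> : (0:R) ^+ 2 + 0 ^+ 2 + 1 ^+ 2 + 0 ^+ 2 = 1 by ring.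
rewrite !divr1; congr (_,_,_,_); ring.
Qed.

End Q.
Section KK.
Local Close Scope ring_scope.
Variables (R : realType) (d : nat) (zeta : quat R).
Hypotheses (d0 : (0 < d)%N) (zc : is_complex zeta) (zo : has_order zeta (4 * d)).
Arguments qmul : simpl never.
Arguments qinv : simpl never.
Arguments qN : simpl never.
Implicit Types x y z : quat R.

Local Notation K := (BinDih zeta).
Local Notation j := (qj R).
Local Notation one := (qone R).

Lemma qpow1 a : qpow one a = one.
Proof. elim: a => [|a IH] //=; by rewrite IH qmul1x. Qed.

Lemma qpowC x a b : qmul (qpow x a) (qpow x b) = qmul (qpow x b) (qpow x a).
Proof. by rewrite -!qpowD addnC. Qed.

Lemma zcplx : cplx zeta.
Proof. move: zc; rewrite /is_complex /cplx; case: zeta => [[[a b] c] e] [-> ->] /=. by rewrite !eqxx. Qed.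

Lemma zpow4 : qpow zeta (4 * d) = one.
Proof. by case: zo => _ []. Qed.

Lemma zN : qN zeta = 1%R.
Proof.
have := qN_pow zeta (4 * d); rewrite zpow4 qN1 => /esym/eqP.
by rewrite pexpr_eq1 ?qN_ge0 ?muln_gt0 // => /eqP.
Qed.

Lemma jN : qN j = 1%R.
Proof. rewrite /qN /qj /=; rewrite expr0n /= expr1n; ring. Qed.

Lemma zpowN a : qN (qpow zeta a) = 1%R.
Proof. by rewrite qN_pow zN expr1n. Qed.
Lemma jpowN a : qN (qpow j a) = 1%R.
Proof. by rewrite qN_pow jN expr1n. Qed.

Lemma nz1 : (1%R : R) != 0%R. Proof. exact: oner_neq0. Qed.

Lemma zpow_mod a : qpow zeta a = qpow zeta (a %% (4 * d)).
Proof.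
by rewrite {1}(divn_eq a (4 * d)) qpowD mulnC qpowM zpow4 qpow1 qmul1x.
Qed.

Lemma zpow_odd a b : qpow zeta a = qpow zeta b -> odd a = odd b.
Proof.
wlog hab : a b / (a <= b)%N.
  move=> W H; case: (leqP a b) => h; first exact: W.
  by symmetry; apply: W; [exact: ltnW | ].
move=> H.
have H1 : qpow zeta (b - a) = one.
  apply: (@qcancel_l _ (qpow zeta a)); first by rewrite zpowN nz1.
  by rewrite -qpowD subnKC // qmulx1 H.
have H2 : (b - a) %% (4 * d) = 0%N.
  apply/eqP; apply: contraT; rewrite -lt0n => hr.
  case: zo => _ [_ Hmin]; exfalso; apply: (Hmin ((b - a) %% (4 * d))).
    by rewrite hr ltn_mod muln_gt0.
  by rewrite -zpow_mod.
have : odd (b - a) = false.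
  by rewrite (divn_eq (b - a) (4 * d)) H2 addn0 oddM (oddM 4) /= andbF.
move=> Hk; by rewrite -(subnKC hab) oddD Hk addbF.
Qed.

Definition c4 := (4 * d).-1.

Lemma odd_c4 : odd c4.
Proof.
have : odd c4.+1 = false by rewrite /c4 prednK ?muln_gt0 // oddM.
by rewrite /= => /negbFE.
Qed.

Lemma zinv : qinv zeta = qpow zeta c4.
Proof.
symmetry; apply: qinv_uniq; first by rewrite zN nz1.
by rewrite -qpowSr /c4 prednK ?muln_gt0 // zpow4.
Qed.

Lemma jz : qmul j zeta = qmul (qpow zeta c4) j.
Proof. by rewrite j_cplx ?zcplx ?zN // zinv. Qed.

Lemma jzpow b : qmul j (qpow zeta b) = qmul (qpow zeta (c4 * b)) j.
Proof.
elim: b => [|b IH] /=; first by rewrite muln0 /= qmulx1 qmul1x.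
by rewrite qmulA jz -qmulA IH qmulA -qpowD mulnS.
Qed.

Lemma jepow e b : exists c, odd c = odd b /\
  qmul (qpow j e) (qpow zeta b) = qmul (qpow zeta c) (qpow j e).
Proof.
elim: e b => [|e IH] b /=; first by exists b; rewrite qmulx1 qmul1x.
have [c [hc Hc]] := IH b.
exists (c4 * c); split; first by rewrite oddM odd_c4 hc.
by rewrite -qmulA Hc qmulA jzpow -!qmulA.
Qed.

Definition rep a e := qmul (qpow zeta a) (qpow j e).

Lemma rep_mul a e b f : exists c, odd c = odd b /\
  qmul (rep a e) (rep b f) = rep (a + c) (e + f).
Proof.
have [c [hc Hc]] := jepow e b.
exists c; split => //.
by rewrite /rep -qmulA (qmulA (qpow j e)) Hc -qmulA qmulA -qpowD -qpowD.
Qed.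

Lemma rep_mul' a e b f : exists c e', odd c = odd a (+) odd b /\ odd e' = odd e (+) odd f /\
  qmul (rep a e) (rep b f) = rep c e'.
Proof.
have [c [hc Hc]] := rep_mul a e b f.
by exists (a + c), (e + f); rewrite !oddD hc Hc.
Qed.

Lemma jj : qpow j 2 = qpow zeta (2 * d).
Proof.
have wc : cplx (qpow zeta (2 * d)) by apply: cplx_pow; exact: zcplx.
have w2 : qmul (qpow zeta (2 * d)) (qpow zeta (2 * d)) = one.
  by rewrite -qpowD addnn -mul2n mulnA zpow4.
have w1 : qpow zeta (2 * d) != one.
  apply/eqP => h; case: zo => _ [_ Hmin]; apply: (Hmin (2 * d)) => //.
  by rewrite muln_gt0 d0 /= ltn_pmul2r.
move: wc w2 w1; case: (qpow zeta (2 * d)) => [[[a b] c] e].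
rewrite /cplx /= => /andP[/eqP-> /eqP->].
rewrite /qmul /qone /mkq => -[H1 H2 _ _] hne.
have hb : b = 0%R.
  apply/eqP; apply: contraT => hb.
  have ha : a = 0%R.
    have : (a * b = 0)%R by nra.
    by move/eqP; rewrite mulf_eq0 (negbTE hb) orbF => /eqP.
  move: H1; rewrite ha; nra.
move: H1 hne; rewrite hb => H1 hne.
have : ((a - 1) * (a + 1) = 0)%R by nra.
move/eqP; rewrite mulf_eq0 => /orP[/eqP h|/eqP h].
  have ha1 : a = 1%R by lra.
  by rewrite ha1 eqxx in hne.
have -> : a = (-1)%R by lra.
rewrite /= /qmul /qj /qone /mkq; congr (_,_,_,_); ring.
Qed.

Lemma rep_red a e : rep a e = rep (a + 2 * d * e./2) (odd e).
Proof.
rewrite /rep -{1}(odd_double_half e) addnC qpowD -muln2 mulnC qpowM jj -qpowM.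
by rewrite qpowD qmulA.
Qed.

Lemma cross x y : cplx x -> cplx y -> x = qmul y j -> qN y = 0%R.
Proof.
case: x => [[[a b] c] e]; case: y => [[[p q] r] s].
rewrite /cplx /= => /andP[/eqP-> /eqP->] /andP[/eqP-> /eqP->].
rewrite /qmul /qj /mkq => -[_ _ H3 H4].
have hp : p = 0%R by move: H3; rewrite (_ : (p * 1 = p)%R); [lra | ring].
have hq : q = 0%R by move: H4; rewrite (_ : (q * 1 = q)%R); [lra | ring].
rewrite /qN /= hp hq; ring.
Qed.

Lemma rep_inj a e b f : rep a e = rep b f -> odd a = odd b /\ odd e = odd f.
Proof.
rewrite (rep_red a e) (rep_red b f).
have oa : odd (a + 2 * d * e./2) = odd a by rewrite oddD -mulnA oddM /= addbF.
have ob : odd (b + 2 * d * f./2) = odd b by rewrite oddD -mulnA oddM /= addbF.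
move: (a + _) (b + _) oa ob => a' b' <- <-.
rewrite /rep.
have zc' : forall k, cplx (qpow zeta k) by move=> k; apply: cplx_pow; exact: zcplx.
case: (odd e); case: (odd f) => /= H.
- split => //; apply: zpow_odd; apply: (@qcancel_r _ (qmul j one)).
    by rewrite qN_mul jN qN1 mulr1 nz1.
  exact: H.
- exfalso; move: H; rewrite !qmulx1 => H.
  have := cross (zc' b') (zc' a') (esym H); rewrite zpowN => h; by move: nz1; rewrite h eqxx.
- exfalso; move: H; rewrite !qmulx1 => H.
  have := cross (zc' a') (zc' b') H; rewrite zpowN => h; by move: nz1; rewrite h eqxx.
- by split => //; apply: zpow_odd; move: H; rewrite !qmulx1.
Qed.

Definition po x := boolp.asbool (exists a e, x = rep a e /\ odd a).
Definition pe x := boolp.asbool (exists a e, x = rep a e /\ odd e).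

Lemma po_rep a e : po (rep a e) = odd a.
Proof.
case Ha: (odd a).
  by apply/boolp.asboolP; exists a, e.
apply/boolp.asboolPn => -[a' [e' [H H']]].
by have [h _] := rep_inj H; rewrite h H' in Ha.
Qed.

Lemma pe_rep a e : pe (rep a e) = odd e.
Proof.
case He: (odd e).
  by apply/boolp.asboolP; exists a, e.
apply/boolp.asboolPn => -[a' [e' [H H']]].
by have [_ h] := rep_inj H; rewrite h H' in He.
Qed.

Lemma K_mul x y : K x -> K y -> K (qmul x y) /\ po (qmul x y) = po x (+) po y
  /\ pe (qmul x y) = pe x (+) pe y.
Proof.
move=> [a [e ->]] [b [f ->]].
have [c [e' [hc [he H]]]] := rep_mul' a e b f.
rewrite -/(rep a e) -/(rep b f) H !po_rep !pe_rep; split; first by exists c, e'.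
by [].
Qed.

Lemma K_one : K one /\ po one = false /\ pe one = false.
Proof.
have -> : one = rep 0 0 by rewrite /rep /= qmulx1.
by rewrite po_rep pe_rep; split => //; exists 0%N, 0%N.
Qed.

Lemma K_N x : K x -> qN x = 1%R.
Proof. by move=> [a [e ->]]; rewrite qN_mul zpowN jpowN mulr1. Qed.

Lemma j4 : qpow j 4 = one.
Proof. rewrite /= /qmul /qj /qone /mkq; congr (_,_,_,_); ring. Qed.

Lemma K_inv x : K x -> K (qinv x).
Proof.
move=> [a [e ->]].
have [c [_ Hc]] := jepow (3 * e) (c4 * a).
suff -> : qinv (qmul (qpow zeta a) (qpow j e)) = qmul (qpow zeta c) (qpow j (3 * e)).
  by exists c, (3 * e).
rewrite -Hc; symmetry; apply: qinv_uniq; first by rewrite qN_mul zpowN jpowN mulr1 nz1.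
rewrite -qmulA (qmulA (qpow zeta _)) -qpowD.
have -> : (c4 * a + a = 4 * d * a)%N by rewrite -{2}(mul1n a) -mulnDl addn1 /c4 prednK ?muln_gt0.
by rewrite (qpowM zeta) zpow4 qpow1 qmul1x -qpowD addnC -mulSn qpowM j4 qpow1.
Qed.

Lemma po_inv x : K x -> po (qinv x) = po x /\ pe (qinv x) = pe x.
Proof.
move=> Kx; have Kx' := K_inv Kx.
have [_ [h1 h2]] := K_mul Kx Kx'.
rewrite qmulV ?(K_N Kx) ?nz1 // in h1 h2.
have [_ [o1 o2]] := K_one.
move: h1 h2; rewrite o1 o2.
by case: (po x); case: (po (qinv x)); case: (pe x); case: (pe (qinv x)).
Qed.

Lemma H_ker x : commutator_subgroup K x -> [/\ K x, po x = false & pe x = false].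
Proof.
elim => [|a b h Ka Kb _ [Kh ph eh]]; first by have [? [? ?]] := K_one.
have Ka' := K_inv Ka; have Kb' := K_inv Kb.
have [[Kab [pab eab]]] := (K_mul Ka Kb, K_mul Ka' Kb').
move=> [Kab' [pab' eab']].
have [[Kc [pc ec]]] := (K_mul Kab Kab', 0).
move=> _.
have [Kch [pch ech]] := K_mul Kc Kh.
have [pa ea] := po_inv Ka; have [pb eb] := po_inv Kb.
split => //; rewrite /qcomm.
  by rewrite pch pc pab pab' ph pa pb; case: (po a); case: (po b).
by rewrite ech ec eab eab' eh ea eb; case: (pe a); case: (pe b).
Qed.

Lemma ker_H x : K x -> po x = false -> pe x = false -> commutator_subgroup K x.
Proof.
move=> [a [e ->]]; rewrite -/(rep a e) po_rep pe_rep => ha he.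
rewrite rep_red he /rep /= qmulx1.
have : odd (a + 2 * d * e./2) = false by rewrite oddD -mulnA oddM /= addbF.
move: (a + _) => a' ha'.
rewrite -(odd_double_half a') ha' add0n -muln2 mulnC.
set m := a'./2.
have -> : qpow zeta (2 * m) = qmul (qcomm (qpow zeta m) j) one.
  rewrite qmulx1 comm_cplx ?zpowN //; last by apply: cplx_pow; exact: zcplx.
  by rewrite -qpowD addnn -mul2n.
apply: CSstep; last exact: CS1.
  by exists m, 0%N; rewrite /= qmulx1.
by exists 0%N, 1%N; rewrite /= qmul1x qmulx1.
Qed.

End KK.
Section MX.
Variable R : realType.
Arguments qmul : simpl never.
Arguments qinv : simpl never.
Arguments qN : simpl never.
Implicit Types x y z : quat R.
Local Notation one := (qone R).

Definition mono n (p : 'S_n) (a : 'I_n -> quat R) : 'M[quat R]_n :=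
  \matrix_(i, j) if p i == j then a i else 0.

Lemma mono_mul n (p q : 'S_n) a b :
  qmx_mul (mono p a) (mono q b) = mono (p * q)%g (fun i => qmul (a i) (b (p i))).
Proof.
apply/matrixP => i k; rewrite /qmx_mul !mxE (bigD1 (p i)) //= big1 => [|l hl].
  rewrite !mxE eqxx permM; case: (q (p i) == k); by rewrite ?qmulx0 addr0.
by rewrite !mxE eq_sym (negbTE hl) qmul0x.
Qed.

Lemma qdiag_mono n (k : 'I_n -> quat R) : qdiag k = mono 1%g k.
Proof. by apply/matrixP => i j; rewrite !mxE perm1. Qed.

Lemma qperm_mono n (s : 'S_n) : qperm_mx R s = mono s (fun _ => one).
Proof. by apply/matrixP => i j; rewrite !mxE. Qed.

Lemma qmx1_mono n : qmx1 R n = mono 1%g (fun _ => one).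
Proof. by rewrite /qmx1 qdiag_mono. Qed.

Lemma Dal_mono n (a : quat R) :
  D_alpha n a = mono 1%g (fun i : 'I_n => if val i == 0%N then a else one).
Proof. by rewrite /D_alpha qdiag_mono. Qed.

Lemma qN0 : qN (0 : quat R) = 0.
Proof. by rewrite /qN /= expr0n /=; ring. Qed.

Lemma mono_eq n (p q : 'S_n) a b : (forall i, qN (a i) != 0) ->
  mono p a = mono q b -> p = q /\ forall i, a i = b i.
Proof.
move=> Ha H.
have E : forall i, (if p i == p i then a i else 0) = (if q i == p i then b i else 0).
  by move=> i; have := congr1 (fun M : 'M_n => M i (p i)) H; rewrite !mxE.
have Pq : forall i, q i = p i.
  move=> i; have := E i; rewrite eqxx; case: eqP => // _ h.
  by move: (Ha i); rewrite h qN0 eqxx.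
split; first by apply/permP => i; rewrite Pq.
by move=> i; have := E i; rewrite eqxx Pq eqxx.
Qed.

End MX.
Section BL.
Local Close Scope ring_scope.
Variables (n : nat) (lam : seq nat).

Lemma sumn_take_le m s : sumn (take m s) <= sumn s.
Proof. by rewrite -{2}(cat_take_drop m s) sumn_cat leq_addr. Qed.

Lemma sumn_take_mono m m' s : m <= m' -> sumn (take m s) <= sumn (take m' s).
Proof. by move=> h; rewrite -(take_takel s h) sumn_take_le. Qed.

Lemma sumn_takeS b : b < size lam -> sumn (take b.+1 lam) = sumn (take b lam) + nth 0 lam b.
Proof. by move=> h; rewrite (take_nth 0 h) sumn_rcons. Qed.

Lemma in_block (x : 'I_n) b :
  (x \in block n lam b) = (sumn (take b lam) <= x < sumn (take b.+1 lam)).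
Proof. by rewrite inE. Qed.

Lemma block_uniq (x : 'I_n) b c : x \in block n lam b -> x \in block n lam c -> b = c.
Proof.
wlog h : b c / b <= c.
  move=> W h1 h2; case: (leqP b c) => h; first exact: W.
  by symmetry; apply: W => //; exact: ltnW.
rewrite !in_block => /andP[_ h1] /andP[h2 _].
apply/eqP; rewrite eqn_leq h /=; apply: contraT; rewrite -ltnNge => hbc.
have := sumn_take_mono lam hbc.
by move=> h3; have := leq_ltn_trans h2 h1; rewrite ltnNge h3.
Qed.

Lemma card_interval (s t : nat) : t <= n -> #|[set j : 'I_n | s <= j < t]| = t - s.
Proof.
move=> htn.
rewrite -sum1_card big_mkcond /=.
rewrite (eq_bigr (fun j : 'I_n => nat_of_bool (s <= j < t))); last first.
  by move=> j _; rewrite inE; case: (_ && _).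
rewrite -(big_mkord xpredT (fun j => nat_of_bool (s <= j < t))).
case: (leqP s t) => hst; last first.
  rewrite big1_seq //; last first.
    move=> j _ /=; apply/eqP; rewrite eqb0 negb_and -ltnNge -leqNgt.
    by case: (ltnP j s) => //= h; apply: leq_trans h; exact: ltnW.
  by move/ltnW: hst; rewrite -subn_eq0 => /eqP ->.
rewrite (big_cat_nat (leq0n s) (leq_trans hst htn)) /= big1_seq; last first.
  by move=> j /=; rewrite mem_index_iota => /andP[_ h]; rewrite leqNgt h.
rewrite (big_cat_nat hst htn) /= [X in _ + (_ + X)]big1_seq; last first.
  by move=> j /=; rewrite mem_index_iota => /andP[h _]; rewrite ltnNge h andbF.
rewrite (eq_big_seq (fun _ => 1)); last first.
  by move=> j; rewrite mem_index_iota => ->.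
by rewrite sum_nat_const_nat muln1 add0n addn0.
Qed.

Hypothesis hsum : sumn lam = n.

Lemma card_block b : b < size lam -> #|block n lam b| = nth 0 lam b.
Proof.
move=> hb; rewrite /block card_interval; last by rewrite -hsum sumn_take_le.
by rewrite sumn_takeS // addKn.
Qed.

Lemma stab_perm (A B : {set 'I_n}) (f : 'S_n) : perm_on A f ->
  (A \subset B \/ [disjoint A & B]) -> forall x, (f x \in B) = (x \in B).
Proof.
move=> hf hAB x; case hx: (x \in A); last by rewrite (out_perm hf) // hx.
have hfx : f x \in A by rewrite perm_closed.
case: hAB => [/subsetP s|/disjointFr dj].
  by rewrite (s _ hx) (s _ hfx).
by rewrite (dj _ hx) (dj _ hfx).
Qed.

Lemma young_stab s : young_perm lam s -> forall b x, (s x \in block n lam b) = (x \in block n lam b).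
Proof.
move=> [f [hf ->]] b.
apply: (big_ind (fun s : 'S_n => forall x, (s x \in block n lam b) = (x \in block n lam b))).
- by move=> x; rewrite perm1.
- by move=> u v hu hv x; rewrite permM hv hu.
move=> i _; apply: stab_perm (hf i) _.
case: (eqVneq (nat_of_ord i) b) => [<-|hib]; first by left.
right; apply/pred0P => x /=; apply/negbTE/negP => /andP[h1 h2].
by move: hib; rewrite (block_uniq h1 h2) eqxx.
Qed.

Lemma tperm_young b (a a' : 'I_n) : b < size lam -> a \in block n lam b -> a' \in block n lam b ->
  young_perm lam (tperm a a').
Proof.
move=> hb ha ha'.
pose b' : 'I_(size lam) := Ordinal hb.
exists (fun i => if i == b' then tperm a a' else 1%g); split.
  move=> i; case: eqP => [->|_]; last exact: perm_on1.
  apply: subset_trans (tperm_on a a') _.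
  by apply/subsetP => x; rewrite in_set2 => /orP[]/eqP ->.
by rewrite -big_mkcond /= big_pred1_eq.
Qed.

Lemma iter_addb c k : iter k (addb c) false = c && odd k.
Proof. elim: k => [|k IH] /=; first by rewrite andbF. by rewrite IH; case: (c); case: (odd k). Qed.

Lemma const_sum (B : {set 'I_n}) (G : 'I_n -> bool) :
  (forall x y, x \in B -> y \in B -> G x = G y) -> ~~ odd #|B| ->
  \big[addb/false]_(i in B) G i = false.
Proof.
move=> hG hB; case: (pickP (mem B)) => [x0 hx0|h0].
  rewrite (eq_bigr (fun _ => G x0)); last by move=> i hi; exact: hG.
  by rewrite big_const iter_addb (negbTE hB) andbF.
by rewrite big_pred0.
Qed.

Lemma cond_sum (B : {set 'I_n}) c :
  \big[addb/false]_(i : 'I_n) (if i \in B then c else false) = c && odd #|B|.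
Proof. by rewrite -big_mkcond big_const iter_addb. Qed.

Lemma even_sum (G : 'I_n -> bool) :
  (forall b, b < size lam -> ~~ odd (nth 0 lam b)) ->
  (forall b x y, x \in block n lam b -> y \in block n lam b -> G x = G y) ->
  \big[addb/false]_(a : 'I_n) G a = false.
Proof.
move=> hev hG.
suff S : forall b, b <= size lam -> \big[addb/false]_(a : 'I_n | a < sumn (take b lam)) G a = false.
  have := S (size lam) (leqnn _); rewrite take_size hsum => E.
  by apply: etrans E; apply: eq_bigl => a; rewrite ltn_ord.
elim => [_|b IH hb]; first by rewrite big_pred0 // => a; rewrite take0.
rewrite (bigID (fun a : 'I_n => a < sumn (take b lam))) /=.
rewrite (eq_bigl (fun a : 'I_n => a < sumn (take b lam))); last first.
  move=> a; rewrite andb_idl // => h; apply: leq_trans h _; exact: sumn_take_mono.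
rewrite IH ?(ltnW hb) //= (eq_bigl (mem (block n lam b))); last first.
  by move=> a; rewrite /= in_block -leqNgt andbC.
apply: (const_sum (B := block n lam b)); first by move=> x y; exact: hG.
by rewrite card_block // hev.
Qed.

End BL.

Section GC.
Local Close Scope ring_scope.

Lemma gcd_even (lam : seq nat) : ~~ odd (gcd_seq lam) ->
  forall b, (b < size lam)%N -> ~~ odd (nth 0%N lam b).
Proof.
move=> h b hb; have: 2 %| gcd_seq lam by rewrite dvdn2.
have : nth 0%N lam b \in lam by exact: mem_nth.
rewrite -dvdn2; move: (nth _ _ _) => x; elim: lam {h hb} => //= y l IH.
rewrite inE => /orP[/eqP ->|hx] h2.
  exact: dvdn_trans h2 (dvdn_gcdl _ _).
by apply: IH hx _; exact: dvdn_trans h2 (dvdn_gcdr _ _).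
Qed.

Lemma gcd_odd (lam : seq nat) : odd (gcd_seq lam) ->
  exists2 b, (b < size lam)%N & odd (nth 0%N lam b).
Proof.
elim: lam => [|y l IH] //= h.
case hy: (odd y); first by exists 0%N.
have hl : odd (gcd_seq l).
  apply: contraTT h => hl; rewrite -dvdn2 dvdn_gcd !dvdn2 hy.
  by move: hl; rewrite /gcd_seq.
by have [b hb hb'] := IH hl; exists b.+1.
Qed.

End GC.
Section Main.
Variables (R : realType) (d : nat) (zeta : quat R).
Hypotheses (d0 : (0 < d)%N) (zc : is_complex zeta) (zo : has_order zeta (4 * d)).
Arguments qmul : simpl never.
Arguments qinv : simpl never.
Arguments qN : simpl never.
Implicit Types x y z : quat R.
Local Notation K := (BinDih zeta).
Local Notation H := (commutator_subgroup (BinDih zeta)).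
Local Notation one := (qone R).

Definition ishom (ph : quat R -> bool) :=
  [/\ forall x y, K x -> K y -> ph (qmul x y) = ph x (+) ph y, ph one = false &
      forall x, K x -> ph (qinv x) = ph x].

Lemma po_hom : ishom (po zeta).
Proof.
split.
- by move=> x y Kx Ky; have [_ []] := K_mul d0 zc zo Kx Ky.
- by have [_ []] := K_one d0 zc zo.
- by move=> x Kx; have [] := po_inv d0 zc zo Kx.
Qed.

Lemma pe_hom : ishom (pe zeta).
Proof.
split.
- by move=> x y Kx Ky; have [_ []] := K_mul d0 zc zo Kx Ky.
- by have [_ []] := K_one d0 zc zo.
- by move=> x Kx; have [] := po_inv d0 zc zo Kx.
Qed.

Lemma Kmul x y : K x -> K y -> K (qmul x y).
Proof. by move=> Kx Ky; have [] := K_mul d0 zc zo Kx Ky. Qed.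
Lemma Kone : K one.
Proof. by have [] := K_one d0 zc zo. Qed.
Lemma Kinv x : K x -> K (qinv x).
Proof. move=> Kx; exact: (K_inv d0 zc zo Kx). Qed.
Lemma Knz x : K x -> qN x != 0.
Proof. by move=> Kx; rewrite (K_N d0 zo Kx) oner_neq0. Qed.

Lemma hom_H ph x : ishom ph -> H x -> ph x = false.
Proof.
move=> [hm h1 hi]; elim => [|a b h Ka Kb Hh IH] //.
have [Kh _ _] := H_ker d0 zc zo Hh.
have Ka' := Kinv Ka; have Kb' := Kinv Kb.
rewrite /qcomm (hm _ _ (Kmul (Kmul Ka Kb) (Kmul Ka' Kb')) Kh) IH addbF.
rewrite (hm _ _ (Kmul Ka Kb) (Kmul Ka' Kb')) (hm _ _ Ka Kb) (hm _ _ Ka' Kb') (hi _ Ka) (hi _ Kb).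
by case: (ph a); case: (ph b).
Qed.

Lemma ker_hom x : K x -> (forall ph, ishom ph -> ph x = false) -> H x.
Proof. by move=> Kx hp; apply: (ker_H d0 zc zo Kx); apply: hp; [exact: po_hom|exact: pe_hom]. Qed.

Lemma qprod_hom n (k : 'I_n -> quat R) : (forall i, K (k i)) ->
  K (qprod k) /\ forall ph, ishom ph -> ph (qprod k) = \big[addb/false]_i ph (k i).
Proof.
move=> Kk.
have L : forall s : seq (quat R), (forall x, x \in s -> K x) ->
  K (foldr (@qmul R) one s) /\ forall ph, ishom ph -> ph (foldr (@qmul R) one s) = \big[addb/false]_(x <- s) ph x.
  elim => [|x s IH] hs /=.
    by split; [exact: Kone | move=> ph [_ h1 _]; rewrite big_nil].
  have [Ks Ps] := IH (fun y hy => hs y (mem_behead (s := x :: s) hy)).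
  have Kx := hs x (mem_head _ _).
  split; first exact: Kmul.
  by move=> ph hph; rewrite big_cons; have [hm _ _] := hph; rewrite hm // Ps.
have [Ks Ps] := L [seq k i | i <- enum 'I_n] (fun x hx => let: ex_intro2 i _ e := mapP hx in eq_ind_r K (Kk i) e).
split => // ph hph; rewrite /qprod Ps // big_map big_enum //.
Qed.

Lemma big_map_enum n (F : 'I_n -> bool) :
  \big[addb/false]_(i <- enum 'I_n) F i = \big[addb/false]_i F i.
Proof. by rewrite big_enum. Qed.

Definition Gmono n (g : 'M[quat R]_n) := exists (p : 'S_n) (k : 'I_n -> quat R),
  [/\ forall i, K (k i), forall ph, ishom ph -> \big[addb/false]_i ph (k i) = false & g = mono p k].

Lemma G_mono n (g : 'M[quat R]_n) : G_n K H g -> Gmono g.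
Proof.
elim => [|s g' Gs _ [p [k [Kk Sk ->]]]].
  exists 1%g, (fun _ => one); split => //; first by move=> _; exact: Kone.
    by move=> ph [_ h1 _]; rewrite big1.
  exact: qmx1_mono.
case: Gs => [[a [Ka [Ha ->]]]|[sg ->]].
  exists (1 * p)%g, (fun i => qmul (a i) (k ((1%g : 'S_n) i))); split.
  - by move=> i; apply: Kmul.
  - move=> ph hph; have [hm _ _] := hph.
    rewrite (eq_bigr (fun i => ph (a i) (+) ph (k i))); last first.
      by move=> i _; rewrite perm1 hm.
    rewrite big_split /= Sk // addbF.
    have [_ Pa] := qprod_hom Ka; rewrite -Pa //; exact: hom_H.
  - by rewrite qdiag_mono mono_mul.
exists (sg * p)%g, (fun i => qmul one (k (sg i))); split.
- by move=> i; apply: Kmul; [exact: Kone|].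
- move=> ph hph.
  rewrite (eq_bigr (fun i => ph (k (sg i)))); last by move=> i _; rewrite qmul1x.
  by rewrite -(reindex_inj (@perm_inj _ sg) (P := xpredT) (F := fun i => ph (k i))) /= Sk.
- by rewrite qperm_mono mono_mul.
Qed.

Lemma qinv1 : qinv one = one.
Proof. by symmetry; apply: qinv_uniq; rewrite ?qN1 ?oner_neq0 ?qmulx1. Qed.

Lemma qmulVK (a X : quat R) : qN a != 0 -> qmul (qmul X (qinv a)) a = X.
Proof. by move=> h; rewrite -qmulA qmulVx // qmulx1. Qed.
Lemma qmulKV (a X : quat R) : qN a != 0 -> qmul (qmul X a) (qinv a) = X.
Proof. by move=> h; rewrite -qmulA qmulV // qmulx1. Qed.

Definition Af n a : 'I_n -> quat R := fun i => if val i == 0%N then a else one.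

Lemma KAf n (a : quat R) (i : 'I_n) : K a -> K (Af a i).
Proof. by rewrite /Af; case: eqP => // _ _; exact: Kone. Qed.

Lemma Pmono n (a : quat R) (s : 'S_n) :
  qmx_mul (qmx_mul (D_alpha n a) (qperm_mx R s)) (D_alpha n (qinv a)) =
  mono s (fun i => qmul (Af a i) (qinv (Af a (s i)))).
Proof.
rewrite !Dal_mono qperm_mono !mono_mul; apply/matrixP => i j; rewrite !mxE !permM !perm1.
case: (s i == j) => //; rewrite qmulx1 /Af; case: (val (s i) == 0%N) => //.
by rewrite qinv1.
Qed.

Lemma sumAf n (a : quat R) (ph : quat R -> bool) : (0 < n)%N -> ph one = false ->
  \big[addb/false]_(i : 'I_n) ph (Af a i) = ph a.
Proof.
move=> n0 h1; rewrite (bigD1 (Ordinal n0)) //= big1 ?addbF // => i hi.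
rewrite /Af; case: eqP => // hi0; exfalso; move: hi; suff -> : i = Ordinal n0 by rewrite eqxx.
by apply: val_inj.
Qed.

Lemma ph3 ph x y z : ishom ph -> K x -> K y -> K z ->
  ph (qmul (qmul x (qinv y)) z) = ph x (+) ph y (+) ph z /\
  ph (qmul x (qmul y (qinv z))) = ph x (+) ph y (+) ph z.
Proof.
move=> [hm _ hi] Kx Ky Kz; have Ky' := Kinv Ky; have Kz' := Kinv Kz.
rewrite (hm _ _ (Kmul Kx Ky') Kz) (hm _ _ Kx Ky') (hi _ Ky).
by rewrite (hm _ _ Kx (Kmul Ky Kz')) (hm _ _ Ky Kz') (hi _ Kz) addbA.
Qed.

Lemma block_size n lam b (x : 'I_n) : x \in block n lam b -> (b < size lam)%N.
Proof.
rewrite in_block; case: (ltnP b (size lam)) => // hb.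
by rewrite !take_oversize ?(leq_trans hb) // => /andP[h1 h2]; move: (leq_ltn_trans h1 h2); rewrite ltnn.
Qed.

Lemma fwd n (lam : seq nat) (a b : quat R) : (0 < n)%N -> sumn lam = n -> K a -> K b ->
  conjugate_in (G_n K H) (P_set n lam a) (P_set n lam b) ->
  (forall c, (c < size lam)%N -> ~~ odd (nth 0%N lam c)) ->
  forall ph, ishom ph -> ph a = ph b.
Proof.
move=> n0 hsum Ka Kb [g [h [Gg [Gh [gh [hg [fw _]]]]]]] hev ph hph.
have [hm h1 hi] := hph.
have [p [k [Kk Sk Eg]]] := G_mono Gg.
have [p' [k' [Kk' _ Eh]]] := G_mono Gh.
move: hg; rewrite Eh Eg mono_mul qmx1_mono => /mono_eq [|hpp hkk].
  by move=> i; apply: Knz; apply: Kmul.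
pose F i := ph (k i) (+) ph (Af a (p i)) (+) ph (Af b i).
have key : forall c (x y : 'I_n), x \in block n lam c -> y \in block n lam c ->
    F (p^-1 x)%g = F (p^-1 y)%g.
  move=> c x y hx hy; have hc := block_size hx.
  pose s := tperm x y.
  have ys : young_perm lam s := tperm_young hc hx hy.
  have [t [yt Ey]] := fw _ (ex_intro _ s (conj ys erefl)).
  rewrite !Pmono in Ey.
  have E2 : qmx_mul (mono t (fun i => qmul (Af b i) (qinv (Af b (t i))))) g =
            qmx_mul g (mono s (fun i => qmul (Af a i) (qinv (Af a (s i))))).
    rewrite -Ey Eg Eh !mono_mul; apply/matrixP => i j; rewrite !mxE.
    rewrite -[((p * s) * p' * p)%g]mulgA hpp mulg1 (permM (p * s)%g p').
    by rewrite -qmulA hkk qmulx1.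
  move: E2; rewrite Eg !mono_mul => /mono_eq [|hperm hval].
    move=> i; apply: Knz; apply: Kmul => //; apply: Kmul; first exact: KAf.
    by apply: Kinv; exact: KAf.
  pose i := (p^-1 x)%g.
  have pi : p i = x by rewrite permKV.
  have pti : p (t i) = y.
    by rewrite -permM hperm permM pi /s tpermL.
  have ti : t i = (p^-1 y)%g by rewrite -pti permK.
  have := congr1 ph (hval i).
  have [e1 _] := ph3 hph (KAf i Kb) (KAf (t i) Kb) (Kk (t i)).
  have [_ e2] := ph3 hph (Kk i) (KAf (p i) Ka) (KAf (s (p i)) Ka).
  rewrite e1 e2 (_ : s (p i) = p (t i)); last by rewrite pi pti /s tpermL.
  rewrite -/i -ti /F.
  by case: (ph (Af b i)); case: (ph (Af b (t i))); case: (ph (k (t i))); case: (ph (k i));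
     case: (ph (Af a (p i))); case: (ph (Af a (p (t i)))).
have S0 := even_sum hsum hev key.
rewrite (reindex_inj (@perm_inj _ p) (P := xpredT) (F := fun x : 'I_n => F (p^-1 x)%g)) /= in S0.
rewrite (eq_bigr F) in S0; last by move=> i _; rewrite permK.
rewrite /F !big_split /= Sk // in S0.
rewrite -(reindex_inj (@perm_inj _ p) (P := xpredT) (F := fun i => ph (Af a i))) /= in S0.
rewrite !sumAf // in S0.
by move: S0; case: (ph a); case: (ph b).
Qed.

Lemma alg1 (bb w a a2 a3 b' : quat R) : qN a != 0 -> qN a2 != 0 -> qN w != 0 -> a3 = a2 ->
  qmul (qmul (qmul (qmul bb w) (qinv a)) (qmul a (qinv a2))) (qmul (qmul a3 (qinv w)) b') = qmul bb b'.
Proof.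
move=> ha ha2 hw ->; rewrite !qmulA (qmulVK _ ha) (qmulVK _ ha2) (qmulKV _ hw) //.
Qed.

Lemma bwd n (lam : seq nat) (a b : quat R) (S : {set 'I_n}) z : (0 < n)%N -> K a -> K b -> K z ->
  (forall s : 'S_n, young_perm lam s -> forall x : 'I_n, (s x \in S) = (x \in S)) ->
  (forall ph, ishom ph -> ph b (+) ph a (+) (ph z && odd #|S|) = false) ->
  conjugate_in (G_n K H) (P_set n lam a) (P_set n lam b).
Proof.
move=> n0 Ka Kb Kz hS hph.
pose w (i : 'I_n) := if i \in S then z else one.
have Kw : forall i, K (w i) by move=> i; rewrite /w; case: (_ \in _) => //; exact: Kone.
pose k i := qmul (qmul (Af b i) (w i)) (qinv (Af a i)).
pose k' i := qmul (qmul (Af a i) (qinv (w i))) (qinv (Af b i)).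
have Kk : forall i, K (k i).
  by move=> i; apply: Kmul; [apply: Kmul => //; exact: KAf | apply: Kinv; exact: KAf].
have Kk' : forall i, K (k' i).
  by move=> i; apply: Kmul; [apply: Kmul; [exact: KAf | exact: Kinv] | apply: Kinv; exact: KAf].
have sumw : forall ph, ishom ph -> \big[addb/false]_i ph (w i) = ph z && odd #|S|.
  move=> ph [_ h1 _]; rewrite -cond_sum; apply: eq_bigr => i _; rewrite /w.
  by case: (_ \in _).
have Sk : forall ph, ishom ph -> \big[addb/false]_i ph (k i) = false.
  move=> ph hph'; have [hm h1 hi] := hph'.
  rewrite (eq_bigr (fun i => ph (Af b i) (+) ph (w i) (+) ph (Af a i))); last first.
    move=> i _; rewrite /k (hm _ _ (Kmul (KAf i Kb) (Kw i)) (Kinv (KAf i Ka))).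
    by rewrite (hm _ _ (KAf i Kb) (Kw i)) (hi _ (KAf i Ka)).
  rewrite !big_split /= !sumAf // sumw //.
  by have := hph ph hph'; case: (ph a); case: (ph b); case: (_ && _).
have Sk' : forall ph, ishom ph -> \big[addb/false]_i ph (k' i) = false.
  move=> ph hph'; have [hm h1 hi] := hph'.
  rewrite (eq_bigr (fun i => ph (Af a i) (+) ph (w i) (+) ph (Af b i))); last first.
    move=> i _; rewrite /k' (hm _ _ (Kmul (KAf i Ka) (Kinv (Kw i))) (Kinv (KAf i Kb))).
    by rewrite (hm _ _ (KAf i Ka) (Kinv (Kw i))) (hi _ (KAf i Kb)) (hi _ (Kw i)).
  rewrite !big_split /= !sumAf // sumw //.
  by have := hph ph hph'; case: (ph a); case: (ph b); case: (_ && _).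
have Gk : forall kk : 'I_n -> quat R, (forall i, K (kk i)) ->
    (forall ph, ishom ph -> \big[addb/false]_i ph (kk i) = false) -> G_n K H (qdiag kk).
  move=> kk Kkk Skk.
  have -> : qdiag kk = qmx_mul (qdiag kk) (qmx1 R n).
    rewrite qdiag_mono qmx1_mono mono_mul; apply/matrixP => i j; rewrite !mxE mulg1.
    by rewrite qmulx1.
  apply: Gnstep; last exact: Gn1.
  left; exists kk; split => //; split => //.
  have [Kp Pp] := qprod_hom Kkk.
  by apply: ker_hom => // ph hph'; rewrite Pp // Skk.
have nzA : forall (c : quat R) (i : 'I_n), K c -> qN (Af c i) != 0 by move=> c i Kc; apply: Knz; exact: KAf.
have conjE : forall s, young_perm lam s ->
  qmx_mul (qmx_mul (qdiag k) (mono s (fun i => qmul (Af a i) (qinv (Af a (s i))))))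
          (qdiag k') = mono s (fun i => qmul (Af b i) (qinv (Af b (s i)))).
  move=> s ys; rewrite !qdiag_mono !mono_mul; apply/matrixP => i j.
  rewrite !mxE mul1g mulg1 perm1; case: (s i == j) => //.
  rewrite /k /k' /w (hS s ys).
  apply: alg1 => //; [exact: nzA | exact: nzA | ].
  by case: (_ \in _); [exact: (Knz Kz) | rewrite qN1 oner_neq0].
exists (qdiag k), (qdiag k'); split; first exact: (Gk k Kk Sk).
split; first exact: (Gk k' Kk' Sk').
split.
  rewrite !qdiag_mono mono_mul qmx1_mono mulg1; apply/matrixP => i j; rewrite !mxE perm1.
  case: (i == j) => //; rewrite /k /k' !qmulA (qmulVK _ (nzA _ _ Ka)).
  have hw := Knz (Kw i).
  by rewrite (qmulKV _ hw) qmulV ?nzA.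
split.
  rewrite !qdiag_mono mono_mul qmx1_mono mulg1; apply/matrixP => i j; rewrite !mxE perm1.
  case: (i == j) => //; rewrite /k /k' !qmulA (qmulVK _ (nzA _ _ Kb)).
  have hw := Knz (Kw i).
  by rewrite (qmulVK _ hw) qmulV ?nzA.
split.
- move=> x [s [ys ->]]; exists s; split => //; rewrite !Pmono; exact: conjE.
- move=> y [s [ys ->]]; exists (qmx_mul (qmx_mul (D_alpha n a) (qperm_mx R s)) (D_alpha n (qinv a))).
  split; first by exists s.
  by rewrite !Pmono conjE.
Qed.

End Main.

Local Close Scope ring_scope.
Unset Implicit Arguments.
Set Strict Implicit.
Set Printing Implicit Defensive.

Theorem lemma4p9 (R : realType) (n d : nat) (zeta : quat R) (lam : seq nat)
    (alpha beta : quat R) :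
  (3 <= n)%N -> (2 <= d)%N ->
  is_complex zeta -> has_order zeta (4 * d) ->
  is_partition n lam ->
  BinDih zeta alpha -> BinDih zeta beta ->
  (conjugate_in (G_n (BinDih zeta) (commutator_subgroup (BinDih zeta)))
                (P_set n lam alpha) (P_set n lam beta)
   <-> commutator_subgroup (BinDih zeta) (qmul alpha (qinv beta))
       \/ odd (gcd_seq lam)).
Proof.
move=> hn hd zc zo hp Ka Kb.
have d0 : (0 < d)%N by apply: leq_trans hd.
have n0 : (0 < n)%N by apply: leq_trans hn.
have hsum : sumn lam = n by case/and3P: hp => _ _ /eqP.
have Kab : BinDih zeta (qmul alpha (qinv beta)).
  by apply: (Kmul d0 zc zo Ka); apply: (Kinv d0 zc zo).
split.
- move=> C; case ho: (odd (gcd_seq lam)); first by right.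
  left; have hev := gcd_even (negbT ho).
  have E := fwd d0 zc zo n0 hsum Ka Kb C hev.
  apply: (ker_hom d0 zc zo) => // ph hph; have [hm _ hi] := hph.
  rewrite (hm _ _ Ka (Kinv d0 zc zo Kb)) (hi _ Kb) (E _ hph).
  by case: (ph beta).
- move=> [Hab|Hodd].
  + apply: (bwd d0 zc zo (S := set0) (z := qone R)) => //.
    * by have := Kone d0 zc zo.
    * by move=> s _ x; rewrite !inE.
    move=> ph hph; have [hm _ hi] := hph.
    have := hom_H d0 zc zo hph Hab.
    rewrite (hm _ _ Ka (Kinv d0 zc zo Kb)) (hi _ Kb) cards0 andbF addbF.
    by case: (ph alpha); case: (ph beta).
  + have [c hc oc] := gcd_odd Hodd.
    apply: (bwd d0 zc zo (S := block n lam c) (z := qmul alpha (qinv beta))) => //.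
    * by move=> s ys x; exact: young_stab ys c x.
    move=> ph hph; have [hm _ hi] := hph.
    rewrite card_block // oc andbT (hm _ _ Ka (Kinv d0 zc zo Kb)) (hi _ Kb).
    by case: (ph alpha); case: (ph beta).
Qed.
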